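(* Let $H=(V,E)$ be a hypergraph whose vertex set $V$ is a partition of $[n]$ into sets of cardinality at least $2$, and suppose $H$ is downward-closed (for every $e\in E$ and every $e'\subseteq e$ with $|e'|>1$, $e'\in E$). Then \[\operatorname{aff}\mathrm{MC}^H=\Big\{w\in\mathbb{R}^{\mathcal{J}^H}\ \Big|\ w(I)=1\ \forall I\in V;\ \ w_J=\sum_{J'\in\mathcal{J}^{e'}:\, J'\supsetneq J}w_{J'}\ \ \forall e,e'\in L(V)\cup E \text{ with } e\subsetneq e',\ |e'|=|e|+1,\ \forall J\in\mathcal{J}^e\Big\}.\]
   Context: Let $n$ be a positive integer, $[n]=\{1,\dots,n\}$. A hypergraph $H=(V,E)$ here has as vertex set $V$ a family of pairwise disjoint subsets of $[n]$, each of cardinality at least $2$, and hyperedge set $E$ consisting of subsets $e\subseteq V$ with $|e|\ge 2$. Write $L(V)=\{\{I\}: I\in V\}$. For a nonempty $e\subseteq V$, $\mathcal{J}^e$ denotes the family of sets $J\subseteq \bigcup_{I\in e} I$ with $|J\cap I|=1$ for every $I\in e$. Let $\mathcal{J}^H=\bigcup_{e\in L(V)\cup E}\mathcal{J}^e$. For $w\in\mathbb{R}^{\mathcal{J}^H}$ write $w_i=w_{\{i\}}$ and $w(A)=\sum_{i\in A}w_i$. Let $\mathscr{S}^H=\{w\in\{0,1\}^{\mathcal{J}^H}: w(I)=1\ \forall I\in V;\ w_J=\prod_{i\in J}w_i\ \forall J\in\mathcal{J}^H, |J|>1\}$, $\mathrm{MC}^H=\operatorname{conv}\mathscr{S}^H$,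 and $\operatorname{aff}$ denotes affine hull. *)

(* Defs.v *)
From HB Require Import structures.
From mathcomp Require Import all_boot all_order all_algebra.
Set Implicit Arguments. Unset Strict Implicit. Unset Printing Implicit Defensive.
Import Order.TTheory GRing.Theory Num.Theory.
Local Open Scope ring_scope.

(* Ground set [n] is represented by 'I_n = {0,...,n-1}. *)

Definition aff_hull (R : pzRingType) (T : finType) (A : {ffun T -> R} -> Prop)
  : {ffun T -> R} -> Prop :=
  fun w => exists (s : seq {ffun T -> R}) (c : seq R),
    [/\ size c = size s, (forall x, x \in s -> A x),
        \sum_(i < size s) c`_i = 1 &
        forall j, w j = \sum_(i < size s) c`_i * (s`_i) j].

Definition conv_hull (R : numDomainType) (T : finType) (A : {ffun T -> R} -> Prop)
  : {ffun T -> R} -> Prop :=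
  fun w => exists (s : seq {ffun T -> R}) (c : seq R),
    [/\ size c = size s, (forall x, x \in s -> A x), (forall a, a \in c -> 0 <= a),
        \sum_(i < size s) c`_i = 1 &
        forall j, w j = \sum_(i < size s) c`_i * (s`_i) j].

Section Hyper.
Variable n : nat.
Notation I := 'I_n.

Definition vertex_partition (V : {set {set I}}) : Prop :=
  partition V [set: I] /\ (forall X, X \in V -> 1 < #|X|)%N.

Definition hyperedges (V : {set {set I}}) (E : {set {set {set I}}}) : Prop :=
  forall e, e \in E -> e \subset V /\ (1 < #|e|)%N.

Definition downward_closed (E : {set {set {set I}}}) : Prop :=
  forall e e' : {set {set I}}, e \in E -> e' \subset e -> (1 < #|e'|)%N -> e' \in E.

Definition LV (V : {set {set I}}) : {set {set {set I}}} := [set [set X] | X in V].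

Definition edgesLE (V : {set {set I}}) (E : {set {set {set I}}}) :=
  LV V :|: E.

Definition Jof (e : {set {set I}}) : {set {set I}} :=
  [set J : {set I} | (J \subset \bigcup_(X in e) X) &&
                     [forall X in e, #|J :&: X| == 1%N]].

Definition JH (V : {set {set I}}) (E : {set {set {set I}}}) : {set {set I}} :=
  \bigcup_(e in edgesLE V E) Jof e.

Definition JHt (V : {set {set I}}) (E : {set {set {set I}}}) :=
  {J : {set I} | J \in JH V E}.
HB.instance Definition _ V E := Finite.on (JHt V E).

(* coordinate w_J (0 if J is not in J^H; only used for J in J^H) *)
Definition coord (R : pzRingType) V E (w : {ffun JHt V E -> R}) (J : {set I}) : R :=
  if insub J is Some j then w j else 0.

Definition wsum (R : pzRingType) V E (w : {ffun JHt V E -> R}) (A : {set I}) : R :=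
  \sum_(i in A) coord w [set i].

Definition SH (R : pzRingType) V E : {ffun JHt V E -> R} -> Prop :=
  fun w =>
    [/\ (forall j, w j = 0 \/ w j = 1),
        (forall X, X \in V -> wsum w X = 1) &
        (forall J, J \in JH V E -> (1 < #|J|)%N ->
           coord w J = \prod_(i in J) coord w [set i])].

Definition MC (R : numDomainType) V E : {ffun JHt V E -> R} -> Prop :=
  conv_hull (@SH R V E).

Definition RHS37 (R : pzRingType) V E : {ffun JHt V E -> R} -> Prop :=
  fun w =>
    (forall X, X \in V -> wsum w X = 1) /\
    (forall e e' : {set {set I}}, e \in edgesLE V E -> e' \in edgesLE V E ->
       e \proper e' -> #|e'| = #|e|.+1 ->
       forall J, J \in Jof e ->
         coord w J = \sum_(J' in Jof e' | J \proper J') coord w J').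

End Hyper.

(* Main.v *)
From Pilot Require Import Defs.
From HB Require Import structures.
From mathcomp Require Import all_boot all_order all_algebra.
From mathcomp Require Import lra.
Import Order.TTheory GRing.Theory Num.Theory.
Import Pilot.Defs.
Set Implicit Arguments. Unset Strict Implicit. Unset Printing Implicit Defensive.

Section Part.
Variable (n : nat) (V : {set {set 'I_n}}) (E : {set {set {set 'I_n}}}).
Hypothesis (HV : vertex_partition V) (HE : hyperedges V E) (HD : downward_closed E).

Lemma cov_all i : i \in cover V.
Proof. by case: HV => /and3P[/eqP -> _ _] _; rewrite inE. Qed.

Lemma trivV : trivIset V.
Proof. by case: HV => /and3P[]. Qed.

Lemma blkV i : pblock V i \in V.
Proof. exact: pblock_mem (cov_all i). Qed.

Lemma blk_mem i : i \in pblock V i.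
Proof. by rewrite mem_pblock cov_all. Qed.

Lemma blkE X i : X \in V -> i \in X -> pblock V i = X.
Proof. exact: def_pblock trivV. Qed.

Lemma sameV X Y i : X \in V -> Y \in V -> i \in X -> i \in Y -> X = Y.
Proof. by move=> XV YV iX iY; rewrite -(blkE XV iX) (blkE YV iY). Qed.

Lemma card1_eq (A : {set 'I_n}) x y : #|A| = 1%N -> x \in A -> y \in A -> x = y.
Proof. by move/eqP/cards1P=> [z ->]; rewrite !inE => /eqP-> /eqP->. Qed.

Lemma inJof (e : {set {set 'I_n}}) (K : {set 'I_n}) : (K \in Jof e) =
  (K \subset \bigcup_(X in e) X) && [forall X in e, #|K :&: X| == 1%N].
Proof. by rewrite inE. Qed.

Lemma JofP (e : {set {set 'I_n}}) K : K \in Jof e ->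
  (forall i, i \in K -> exists2 X, X \in e & i \in X) /\
  (forall X, X \in e -> #|K :&: X| = 1%N).
Proof.
rewrite inJof => /andP[/subsetP sK /forall_inP cK]; split.
  by move=> i /sK /bigcupP[X Xe iX]; exists X.
by move=> X /cK /eqP.
Qed.

Lemma JofI (e : {set {set 'I_n}}) (K : {set 'I_n}) : (forall i, i \in K -> exists2 X, X \in e & i \in X) ->
  (forall X, X \in e -> #|K :&: X| = 1%N) -> K \in Jof e.
Proof.
move=> h1 h2; rewrite inJof; apply/andP; split.
  by apply/subsetP=> i /h1 [X Xe iX]; apply/bigcupP; exists X.
by apply/forall_inP=> X /h2 ->.
Qed.

Lemma edge_sub (e : {set {set 'I_n}}) : e \in edgesLE V E -> e \subset V /\ (0 < #|e|)%N.
Proof.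
rewrite !inE => /orP[/imsetP[X XV ->]|/HE[h1 h2]].
  by rewrite cards1 sub1set.
by split=> //; apply: ltn_trans h2.
Qed.

Lemma blk_in (e : {set {set 'I_n}}) K i : e \subset V -> K \in Jof e -> i \in K -> pblock V i \in e.
Proof.
move=> /subsetP eV /JofP[h1 _] /h1 [X Xe iX].
by rewrite (blkE (eV _ Xe) iX).
Qed.

Lemma set1_JH i : [set i] \in JH V E.
Proof.
apply/bigcupP; exists [set pblock V i].
  by rewrite inE; apply/orP; left; apply/imsetP; exists (pblock V i) => //; exact: blkV.
apply: JofI.
  by move=> j; rewrite inE => /eqP->; exists (pblock V i); rewrite ?inE ?blk_mem.
move=> X; rewrite inE => /eqP->.
by rewrite (setIidPl _) ?cards1 // sub1set blk_mem.
Qed.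

Lemma JH_neq0 (K : {set 'I_n}) : K \in JH V E -> K != set0.
Proof.
move=> /bigcupP[e /edge_sub [_ ne] /JofP [_ h2]].
have [X Xe] : exists X, X \in e by apply/set0Pn; rewrite -card_gt0.
have c := h2 X Xe; apply/set0Pn.
have [x xI] : exists x, x \in K :&: X by apply/set0Pn; rewrite -card_gt0 c.
by exists x; move: xI; rewrite inE => /andP[].
Qed.

Section Ext.
Variables (e : {set {set 'I_n}}) (Y : {set 'I_n}) (J : {set 'I_n}).
Hypotheses (eV : e \subset V) (YV : Y \in V) (Ye : Y \notin e) (HJ : J \in Jof e).

Lemma notinJ y : y \in Y -> y \notin J.
Proof.
move=> yY; apply/negP => yJ.
by move: (blk_in eV HJ yJ); rewrite (blkE YV yY) (negbTE Ye).
Qed.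

Lemma ext_set :
  [set J' in Jof (Y |: e) | J \proper J'] = [set y |: J | y in Y].
Proof.
have eV' : Y |: e \subset V by rewrite subUset sub1set YV eV.
have [h1 h2] := JofP HJ.
have key : forall J' i, J' \in Jof (Y |: e) -> J \subset J' -> i \in J' ->
    pblock V i \in e -> i \in J.
  move=> J' i HJ' sJ iJ' bi.
  have [_ h2'] := JofP HJ'.
  have := h2 _ bi => c.
  have [x xI] : exists x, x \in J :&: pblock V i
    by apply/set0Pn; rewrite -card_gt0 c.
  move: (xI); rewrite inE => /andP[xJ xb].
  have -> : i = x.
    apply: (card1_eq (h2' (pblock V i) _)); first by rewrite inE bi orbT.
      by rewrite inE iJ' blk_mem.
    by rewrite inE (subsetP sJ _ xJ) xb.
  done.
apply/setP => J'; rewrite inE; apply/andP/imsetP.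
  move=> [HJ' /properP [sJ [y yJ' yJ]]].
  have [h1' h2'] := JofP HJ'.
  have by_ : pblock V y \in Y |: e by exact: blk_in eV' HJ' yJ'.
  have byY : pblock V y = Y.
    move: by_; rewrite !inE => /orP[/eqP //|be].
    by rewrite (key _ _ HJ' sJ yJ' be) in yJ.
  exists y; first by rewrite -byY blk_mem.
  apply/setP => i; rewrite !inE; apply/idP/orP.
    move=> iJ'; have := blk_in eV' HJ' iJ'; rewrite !inE => /orP[/eqP bi|be].
      left; apply/eqP; apply: (card1_eq (h2' Y _)); first by rewrite !inE eqxx.
        by rewrite inE iJ' -bi blk_mem.
      by rewrite inE yJ' -byY blk_mem.
    by right; exact: key _ _ HJ' sJ iJ' be.
  by move=> [/eqP->|/(subsetP sJ)].
move=> [y yY ->]; have yJ := notinJ yY; split.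
  apply: JofI.
    move=> i; rewrite !inE => /orP[/eqP->|/h1 [X Xe iX]].
      by exists Y; rewrite ?inE ?eqxx.
    by exists X; rewrite // inE Xe orbT.
  move=> X; rewrite !inE => /orP[/eqP->|Xe].
    suff -> : (y |: J) :&: Y = [set y] by rewrite cards1.
    apply/setP=> i; rewrite !inE; apply/idP/idP.
      move=> /andP[/orP[//|iJ] iY].
      by move: (blk_in eV HJ iJ); rewrite (blkE YV iY) (negbTE Ye).
    by move=> /eqP->; rewrite eqxx yY.
  suff -> : (y |: J) :&: X = J :&: X by rewrite h2.
  apply/setP=> i; rewrite !inE; case: (i =P y) => //= -> .
  case yX: (y \in X); rewrite ?andbF //.
  have XV : X \in V by exact: (subsetP eV).
  by move: Xe; rewrite -(sameV YV XV yY yX) (negbTE Ye).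
rewrite properE subsetUr /=; apply/negP => /subsetP /(_ y).
by rewrite !inE eqxx => /(_ isT); apply/negP.
Qed.

Lemma ext_inj : {in Y &, injective (fun y => y |: J)}.
Proof.
move=> y y' yY y'Y /setP /(_ y); rewrite !inE eqxx /= => /esym /orP[/eqP //|].
by rewrite (negbTE (notinJ yY)).
Qed.

Lemma ext_sum (Rg : pzRingType) (F : {set 'I_n} -> Rg) :
  (\sum_(J' in Jof (Y |: e) | J \proper J') F J' = \sum_(y in Y) F (y |: J))%R.
Proof.
rewrite -(big_imset _ ext_inj) -ext_set.
by apply: eq_bigl => J'; rewrite !inE.
Qed.

End Ext.
End Part.
Section Vec.
Variable (R : realFieldType) (n : nat) (V : {set {set 'I_n}}) (E : {set {set {set 'I_n}}}).
Hypothesis (HV : vertex_partition V) (HE : hyperedges V E) (HD : downward_closed E).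
Local Open Scope ring_scope.
Local Notation vec := {ffun JHt V E -> R}.

Lemma coordE (w : vec) (j : JHt V E) : coord w (val j) = w j.
Proof. by rewrite /coord valK. Qed.

Lemma coord_lin (w : vec) (s : seq vec) (c : seq R) :
  (forall j, w j = \sum_(i < size s) c`_i * (s`_i) j) ->
  forall J, coord w J = \sum_(i < size s) c`_i * coord s`_i J.
Proof.
move=> hw J; rewrite /coord; case: insub => [j|]; first exact: hw.
by rewrite big1 // => i _; rewrite mulr0.
Qed.

Lemma RHS_aff (s : seq vec) (c : seq R) (w : vec) :
  (forall x, x \in s -> RHS37 x) -> \sum_(i < size s) c`_i = 1 ->
  (forall j, w j = \sum_(i < size s) c`_i * (s`_i) j) -> RHS37 w.
Proof.
move=> hs hc hw.
have hsi : forall i : 'I_(size s), RHS37 s`_i by move=> i; apply/hs/mem_nth.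
split.
  move=> X XV; rewrite /wsum.
  under eq_bigr do rewrite (coord_lin hw).
  rewrite exchange_big /= -[RHS]hc; apply: eq_bigr => i _.
  have h := (hsi i).1 X XV; rewrite /wsum in h.
  by rewrite -mulr_sumr h mulr1.
move=> e e' He He' pr ce J HJ.
rewrite (coord_lin hw).
under [in RHS]eq_bigr do rewrite (coord_lin hw).
rewrite exchange_big /=; apply: eq_bigr => i _.
by rewrite -mulr_sumr ((hsi i).2 e e' He He' pr ce J HJ).
Qed.

Lemma succ_edge (e e' : {set {set 'I_n}}) : e' \subset V -> e \proper e' ->
  #|e'| = #|e|.+1 -> exists Y, [/\ Y \in V, Y \notin e & e' = Y |: e].
Proof.
move=> e'V /properP[see' _] ce.
have : #|e' :\: e| = 1%N.
  move: (cardsID e e'); rewrite (setIidPr see') ce => h.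
  by apply/eqP; rewrite -(eqn_add2l #|e|) h addn1.
move/eqP/cards1P => [Y hY].
have Ye' : Y \in e' :\: e by rewrite hY set11.
move: (Ye'); rewrite inE => /andP[Ye Ye'2].
exists Y; split => //; first exact: (subsetP e'V).
apply/setP => X; rewrite !inE; apply/idP/idP.
  move=> Xe'; case Xe: (X \in e); rewrite ?orbT //.
  have : X \in e' :\: e by rewrite inE Xe Xe'.
  by rewrite hY inE => ->.
by move=> /orP[/eqP->//|/(subsetP see')].
Qed.

Lemma edge_subV (e : {set {set 'I_n}}) : e \in edgesLE V E -> e \subset V.
Proof. by move/(edge_sub HE) => []. Qed.

Lemma prod_coord (x : vec) J : SH x -> J \in JH V E ->
  coord x J = \prod_(i in J) coord x [set i].
Proof.
move=> [_ _ hp] HJ; case: (ltnP 1 #|J|) => [/hp -> //|].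
have := JH_neq0 HE HJ; rewrite -card_gt0 => h1 h2.
have : #|J| == 1%N by rewrite eqn_leq h1 h2.
by move/cards1P => [j ->]; rewrite big_set1.
Qed.

Lemma SH_RHS (x : vec) : SH x -> RHS37 x.
Proof.
move=> hx; have [_ hw _] := hx; split => //.
move=> e e' He He' pr ce J HJ.
have e'V := edge_subV He'; have eV := edge_subV He.
have [Y [YV Ye He'E]] := succ_edge e'V pr ce; subst e'.
rewrite (ext_sum HV eV YV Ye HJ).
have JJH : J \in JH V E by apply/bigcupP; exists e.
transitivity (\sum_(y in Y) coord x [set y] * coord x J).
  by rewrite -mulr_suml; have := hw Y YV; rewrite /wsum => ->; rewrite mul1r.
apply: eq_bigr => y yY.
have yJ := notinJ HV eV YV Ye HJ yY.
have yJH : y |: J \in JH V E.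
  apply/bigcupP; exists (Y |: e) => //.
  have : y |: J \in [set y |: J | y in Y] by apply/imsetP; exists y.
  by rewrite -(ext_set HV eV YV Ye HJ) inE => /andP[].
by rewrite (prod_coord hx yJH) big_setU1 //= (prod_coord hx JJH).
Qed.

Lemma MC_RHS (x : vec) : MC x -> RHS37 x.
Proof.
move=> [s [c [_ hs _ hc hw]]]; apply: (RHS_aff _ hc hw).
by move=> y /hs; exact: SH_RHS.
Qed.

Lemma aff_RHS (x : vec) : aff_hull (@MC n R V E) x -> RHS37 x.
Proof.
move=> [s [c [_ hs hc hw]]]; apply: (RHS_aff _ hc hw).
by move=> y /hs; exact: MC_RHS.
Qed.

End Vec.
Section Uniq.
Variable (R : realFieldType) (n : nat) (V : {set {set 'I_n}}) (E : {set {set {set 'I_n}}}).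
Hypothesis (HV : vertex_partition V) (HE : hyperedges V E) (HD : downward_closed E).
Local Open Scope ring_scope.
Local Notation vec := {ffun JHt V E -> R}.
Variable (Rf : {set 'I_n}).
Hypothesis hR : forall X, X \in V -> #|Rf :&: X| = 1%N.

Lemma peel (J : {set 'I_n}) e' y : e' \in edgesLE V E -> J \in Jof e' ->
  y \in J -> J :\ y != set0 ->
  [/\ e' :\ pblock V y \in edgesLE V E, J :\ y \in Jof (e' :\ pblock V y),
      pblock V y \in e' & pblock V y \notin e' :\ pblock V y].
Proof.
move=> He' HJ yJ Kn0.
set Y := pblock V y; set K := J :\ y; set e := e' :\ Y.
have e'V := edge_subV HE He'.
have Ye' : Y \in e' := blk_in HV e'V HJ yJ.
have [h1 h2] := JofP HJ.
have YV : Y \in V := blkV HV y.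
have HK : K \in Jof e.
  apply: JofI.
    move=> i; rewrite !inE => /andP[iy iJ].
    exists (pblock V i); last exact: (blk_mem HV).
    rewrite !inE (blk_in HV e'V HJ iJ) andbT; apply/negP => /eqP bi.
    have := card1_eq (h2 Y Ye'); move=> /(_ i y).
    have iY : i \in Y by rewrite -bi (blk_mem HV i).
    have yY : y \in Y := blk_mem HV y.
    rewrite !inE iJ yJ iY yY => /(_ isT isT) /eqP.
    by rewrite (negbTE iy).
  move=> X; rewrite !inE => /andP[XY Xe'].
  rewrite -(h2 X Xe'); apply: eq_card => i; rewrite !inE.
  case: (i =P y) => //= ->; case yX: (y \in X); rewrite ?andbF //.
  by move: XY; rewrite (sameV HV YV (subsetP e'V _ Xe') (blk_mem HV y) yX) eqxx.
split => //; last by rewrite !inE eqxx.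
have [k kK] : exists k, k \in K by apply/set0Pn.
have eV : e \subset V by apply: subset_trans e'V; exact: subD1set.
have ke := blk_in HV eV HK kK.
rewrite /edgesLE inE; case: (ltnP 1 #|e|) => ce.
  apply/orP; right; apply: (HD _ (subD1set _ _)) => //.
  move: He'; rewrite inE => /orP[/imsetP[X _ eX]|//].
  move: ce; rewrite /e eX => ce.
  have := subset_leq_card (subD1set [set X] Y); rewrite cards1 => h.
  by have := leq_trans ce h.
apply/orP; left; apply/imsetP; exists (pblock V k); first exact: (subsetP eV).
have c1 : #|e| == 1%N by rewrite eqn_leq ce card_gt0; apply/set0Pn; exists (pblock V k).
move/cards1P: c1 => [Z eZ]; move: ke; rewrite eZ inE => /eqP->; done.
Qed.

Lemma uniq_RHS (u v : vec) : RHS37 u -> RHS37 v ->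
  (forall J, J \in JH V E -> [disjoint J & Rf] -> coord u J = coord v J) -> u = v.
Proof.
move=> hu hv h0.
suff H : forall m J, (#|J :&: Rf| <= m)%N -> J \in JH V E -> coord u J = coord v J.
  by apply/ffunP => j; rewrite -!coordE; apply: (H _ _ (leqnn _) (valP j)).
elim=> [|m IH] J cJ HJ.
  apply: h0 => //; rewrite -setI_eq0 -cards_eq0; by move: cJ; rewrite leqn0.
case: (leqP #|J :&: Rf| m) => [le|gt]; first exact: IH le HJ.
have [y yJR] : exists y, y \in J :&: Rf
  by apply/set0Pn; rewrite -card_gt0; apply: leq_trans gt.
move: (yJR); rewrite inE => /andP[yJ yR].
set Y := pblock V y.
have YV : Y \in V := blkV HV y.
have RY : forall y', y' \in Y -> y' != y -> y' \notin Rf.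
  move=> y' y'Y y'y; apply/negP => y'R.
  have := card1_eq (hR YV) (_ : y' \in Rf :&: Y) (_ : y \in Rf :&: Y).
  rewrite !inE y'R y'Y yR (blk_mem HV) => /(_ isT isT) /eqP. by rewrite (negbTE y'y).
have [e' He' HJ'] := bigcupP HJ.
case: (boolP (J :\ y == set0)) => [/eqP K0|Kn0].
  have Jy : J = [set y] by rewrite -(setD1K yJ) K0 setU0.
  have [hu1 _] := hu; have [hv1 _] := hv.
  have := hu1 Y YV; have := hv1 Y YV; rewrite /wsum !(bigD1 y (blk_mem HV y)) /= => ev eu.
  have eS : \sum_(i in Y | i != y) coord u [set i] = \sum_(i in Y | i != y) coord v [set i].
    apply: eq_bigr => i /andP[iY iy]; apply: IH (set1_JH E HV i).
    suff -> : [set i] :&: Rf = set0 by rewrite cards0.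
    apply/setP => z; rewrite !inE; case: (z =P i) => //= ->; exact/negbTE/RY.
  rewrite Jy; apply: (addIr (\sum_(i in Y | i != y) coord u [set i])).
  by rewrite eu eS ev.
have [He HK Ye' Ye] := peel He' HJ' yJ Kn0.
set K := J :\ y in Kn0 HK *; set e := e' :\ Y in He HK Ye *.
have e'E : Y |: e = e' by rewrite setD1K.
have pr : e \proper e' by exact: properD1.
have ce : #|e'| = #|e|.+1 by rewrite (cardsD1 Y e') Ye'.
have eV : e \subset V := subset_trans (subD1set e' Y) (edge_subV HE He').
have KJH : K \in JH V E by apply/bigcupP; exists e.
have extJH : forall y', y' \in Y -> y' |: K \in JH V E.
  move=> y' y'Y; apply/bigcupP; exists e' => //.
  have : y' |: K \in [set y |: K | y in Y] by apply/imsetP; exists y'.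
  by rewrite -(ext_set HV eV YV Ye HK) e'E inE => /andP[].
have cK : (#|K :&: Rf| <= m)%N.
  rewrite -ltnS; apply: leq_trans cJ; apply: proper_card.
  rewrite properE; apply/andP; split.
    by apply/subsetP => z; rewrite !inE => /andP[/andP[_ ->] ->].
  apply/subsetP => /(_ y yJR); by rewrite !inE eqxx.
have yK : y |: K = J by rewrite setD1K.
have split_eq : forall w : vec, RHS37 w ->
    coord w K = coord w J + \sum_(y' in Y | y' != y) coord w (y' |: K).
  move=> w [_ hw2]; rewrite (hw2 e e' He He' pr ce K HK) -e'E.
  by rewrite (ext_sum HV eV YV Ye HK) (bigD1 y (blk_mem HV y)) /= yK.
have eS : \sum_(y' in Y | y' != y) coord u (y' |: K) =
          \sum_(y' in Y | y' != y) coord v (y' |: K).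
  apply: eq_bigr => y' /andP[y'Y y'y]; apply: IH (extJH _ y'Y).
  apply: leq_trans cK; apply: subset_leq_card; apply/subsetP => z.
  rewrite !inE => /andP[/orP[/eqP->|zK] zR] //; last by rewrite zK zR.
  by move: (RY _ y'Y y'y); rewrite zR.
apply: (addIr (\sum_(y' in Y | y' != y) coord u (y' |: K))).
by rewrite -split_eq // eS -split_eq // (IH _ cK KJH).
Qed.

End Uniq.
Section Mob.
Variable (R : realFieldType) (T : finType).
Local Open Scope ring_scope.

Lemma sign_sq (a : nat) : (-1) ^+ a * (-1) ^+ a = 1 :> R.
Proof. by rewrite -exprD addnn -mul2n exprM sqrrN expr1n expr1n. Qed.

Lemma alt_sum (A B : {set T}) : A \proper B ->
  \sum_(C : {set T} | (A \subset C) && (C \subset B)) (-1) ^+ #|C| = 0 :> R.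
Proof.
move=> /properP [sAB [x xB xA]].
pose h (C : {set T}) := if x \in C then C :\ x else x |: C.
have hK : involutive h.
  move=> C; rewrite /h; case xC: (x \in C).
    by rewrite setD11 setD1K.
  by rewrite setU11 setU1K ?xC.
set S := (X in X = _).
have : S = - S.
  rewrite {1}/S (reindex_inj (inv_inj hK)) /S -sumrN.
  apply: eq_big => C.
    rewrite /h; case: ifP => xC.
      rewrite subsetD1 xA andbT; congr (_ && _); apply/idP/idP.
        by move=> sub; rewrite -(setD1K xC) subUset sub1set xB.
      by move=> sub; apply: subset_trans (subD1set _ _) sub.
    rewrite subUset sub1set xB /=; congr (_ && _); apply/idP/idP.
      move/subsetP=> sub; apply/subsetP => z zA; have := sub z zA.
      rewrite !inE => /orP[/eqP zx|//]; by rewrite -zx zA in xA.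
    by move=> sub; apply: subset_trans sub (subsetUr _ _).
  move=> _; rewrite /h; case: ifP => xC.
    by rewrite (cardsD1 x C) xC add1n exprS mulN1r opprK.
  by rewrite cardsU1 xC add1n exprS mulN1r.
move=> hS; lra.
Qed.

Lemma mobius (F : {set {set T}})
  (down : forall K L : {set T}, K \in F -> L \subset K -> L \in F) (W : {set T} -> R) J :
  J \in F ->
  \sum_(K in F | J \subset K)
     ((-1) ^+ #|K| * \sum_(K' in F | K \subset K') (-1) ^+ #|K'| * W K') = W J.
Proof.
move=> JF.
under eq_bigr do rewrite mulr_sumr.
rewrite (exchange_big_dep (fun K' => (K' \in F) && (J \subset K'))) /=; last first.
  by move=> K K' /andP[_ JK] /andP[K'F KK']; rewrite K'F (subset_trans JK KK').
rewrite (bigD1 J) /=; last by rewrite JF subxx.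
rewrite [X in _ + X]big1 ?addr0; last first.
  move=> K' /andP[/andP[K'F JK'] K'J].
  have pr : J \proper K' by rewrite properEneq eq_sym K'J JK'.
  rewrite -mulr_suml.
  rewrite (_ : \sum_(i | _) _ = \sum_(C : {set T} | (J \subset C) && (C \subset K')) (-1) ^+ #|C|).
    by rewrite (alt_sum pr) mul0r.
  apply: eq_bigl.
  move=> K; apply/andP/andP => [[/andP[_ ->] /andP[_ ->]]|[JK KK']] //.
  by split; apply/andP; split => //; apply: down K'F KK'.
rewrite (big_pred1 J).
  by rewrite mulrA sign_sq mul1r.
move=> K; apply/andP/eqP => [[/andP[_ JK] /andP[_ KJ]]|->].
  by apply/eqP; rewrite eqEsubset KJ JK.
by rewrite JF subxx.
Qed.
End Mob.
Section Main.
Variable (R : realFieldType) (n : nat) (V : {set {set 'I_n}}) (E : {set {set {set 'I_n}}}).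
Hypothesis (HV : vertex_partition V) (HE : hyperedges V E) (HD : downward_closed E).
Local Open Scope ring_scope.
Local Notation vec := {ffun JHt V E -> R}.

Lemma sub_JH (K L : {set 'I_n}) : K \in JH V E -> L \subset K -> L != set0 ->
  L \in JH V E.
Proof.
move=> HK sLK Ln0.
move: {2}#|K :\: L| (leqnn #|K :\: L|) => m.
elim: m K HK sLK => [|m IH] K HK sLK cm.
  have : K :\: L == set0 by rewrite -cards_eq0 -leqn0.
  rewrite setD_eq0 => sKL.
  by have -> : L = K by apply/eqP; rewrite eqEsubset sLK sKL.
case: (boolP (K :\: L == set0)) => [|/set0Pn [y]].
  rewrite setD_eq0 => sKL.
  by have -> : L = K by apply/eqP; rewrite eqEsubset sLK sKL.
rewrite inE => /andP[yL yK].
have [e' He' HK'] := bigcupP HK.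
have sLKy : L \subset K :\ y by rewrite subsetD1 sLK yL.
have Kyn0 : K :\ y != set0.
  apply: contraNneq Ln0 => Ky0; by rewrite -subset0 -Ky0.
have [He HKy _ _] := peel HV HE HD He' HK' yK Kyn0.
apply: (IH (K :\ y)) => //; first by apply/bigcupP; eexists; eauto.
have -> : (K :\ y) :\: L = (K :\: L) :\ y.
  by apply/setP => z; rewrite !inE; case: (z == y); case: (z \in L).
move: cm; rewrite (cardsD1 y (K :\: L)) !inE yL yK /=.
by rewrite add1n ltnS.
Qed.

Lemma exists_ref : exists Rf : {set 'I_n}, forall X, X \in V -> #|Rf :&: X| = 1%N.
Proof.
exists [set i | [pick j in pblock V i] == Some i].
move=> X XV.
have X0 : X != set0.
  apply/negP => /eqP X0; case: HV => /and3P[_ _ h] _.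
  by rewrite -X0 XV in h.
have [x xX] : exists x, x \in X by apply/set0Pn.
have [r [e rX]] : exists r, [pick j in X] = Some r /\ r \in X.
  by case: pickP => [r rX|/(_ x)]; [exists r|rewrite xX].
suff -> : [set i | [pick j in pblock V i] == Some i] :&: X = [set r] by rewrite cards1.
apply/setP => z; rewrite !inE; case zX: (z \in X); last first.
  by rewrite andbF; apply/esym/negbTE; apply: contraFneq zX => ->.
by rewrite andbT (blkE HV XV zX) e eq_sym.
Qed.

Section WithRef.
Variable Rf : {set 'I_n}.
Hypothesis hR : forall X, X \in V -> #|Rf :&: X| = 1%N.

Definition Kr (K : {set 'I_n}) := K :|: [set r in Rf | [disjoint pblock V r & K]].

Lemma Kr_trans K : (K == set0) || (K \in JH V E) ->
  forall X, X \in V -> #|Kr K :&: X| = 1%N.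
Proof.
move=> HK X XV.
case: (boolP [disjoint X & K]) => hd.
  rewrite -(hR XV); apply: eq_card => z; rewrite !inE.
  case zX: (z \in X); rewrite ?andbF // !andbT (blkE HV XV zX) hd andbT.
  by rewrite (disjointFr hd zX).
have [k] : exists k, k \in X :&: K by apply/set0Pn; rewrite setI_eq0.
rewrite inE => /andP[kX kK].
have KJH : K \in JH V E.
  move: HK => /orP[/eqP K0|//]; by rewrite K0 inE in kK.
have [e He HKe] := bigcupP KJH.
have Xe : X \in e.
  by have := blk_in HV (edge_subV HE He) HKe kK; rewrite (blkE HV XV kX).
rewrite -((JofP HKe).2 X Xe); apply: eq_card => z; rewrite !inE.
case zX: (z \in X); rewrite ?andbF // !andbT (blkE HV XV zX) (negbTE hd).
by rewrite andbF orbF.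
Qed.

Lemma Kr_sub (J K : {set 'I_n}) : [disjoint J & Rf] -> (J \subset Kr K) = (J \subset K).
Proof.
move=> dJ; apply/idP/idP; last by move=> h; apply: subset_trans h (subsetUl _ _).
move/subsetP => h; apply/subsetP => z zJ; have := h z zJ.
rewrite !inE => /orP[//|/andP[zR _]].
by rewrite (disjointFr dJ zJ) in zR.
Qed.

End WithRef.

Definition fS (S : {set 'I_n}) : vec := [ffun j : JHt V E => if val j \subset S then 1 else 0].

Lemma coord_in (w : vec) J (HJ : J \in JH V E) : coord w J = w (Sub J HJ).
Proof. by rewrite /coord insubT. Qed.

Lemma coord_fS S J : J \in JH V E -> coord (fS S) J = if J \subset S then 1 else 0.
Proof. by move=> HJ; rewrite (coord_in _ HJ) ffunE. Qed.

Lemma SH_fS S : (forall X, X \in V -> #|S :&: X| = 1%N) -> SH (fS S).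
Proof.
move=> hS; split.
- by move=> j; rewrite ffunE; case: ifP; [right|left].
- move=> X XV; rewrite /wsum.
  under eq_bigr do rewrite coord_fS ?(set1_JH E HV) // sub1set.
  rewrite -big_mkcondr /=.
  rewrite (eq_bigl (fun i => i \in S :&: X)); last by move=> i; rewrite !inE andbC.
  by rewrite sumr_const hS.
- move=> J HJ _; rewrite coord_fS //.
  under eq_bigr do rewrite coord_fS ?(set1_JH E HV) // sub1set.
  case: (boolP (J \subset S)) => h.
    by rewrite big1 // => i iJ; rewrite (subsetP h _ iJ).
  have [i iJ iS] := subsetPn h.
  by rewrite (bigD1 i iJ) /= (negbTE iS) mul0r.
Qed.

Lemma list_sum (X : Type) (r : seq X) (f : X -> R) (g : X -> vec) j :
  \sum_(i < size (map g r)) (map f r)`_i * ((map g r)`_i) j = \sum_(x <- r) f x * g x j.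
Proof.
elim: r => [|x r IH]; first by rewrite big_nil big_ord0.
by rewrite /= big_ord_recl /= IH big_cons.
Qed.

Lemma list_sum1 (X : Type) (r : seq X) (f : X -> R) (g : X -> vec) :
  \sum_(i < size (map g r)) (map f r)`_i = \sum_(x <- r) f x.
Proof.
elim: r => [|x r IH]; first by rewrite big_nil big_ord0.
by rewrite /= big_ord_recl /= IH big_cons.
Qed.

Lemma main_dir (w : vec) : RHS37 w -> aff_hull (@MC n R V E) w.
Proof.
move=> hw.
have [Rf hR] := exists_ref.
pose FF := [set K : {set 'I_n} | ((K == set0) || (K \in JH V E)) && [disjoint K & Rf]].
have down : forall K L : {set 'I_n}, K \in FF -> L \subset K -> L \in FF.
  move=> K L; rewrite !inE => /andP[HK dK] sLK.
  rewrite (disjointWl sLK dK) andbT.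
  case: (boolP (L == set0)) => //= Ln0.
  move: HK => /orP[/eqP K0|KJH]; last exact: sub_JH KJH sLK Ln0.
  by move: sLK Ln0; rewrite K0 subset0 => ->.
pose W := fun K : {set 'I_n} => if K == set0 then 1 else coord w K.
pose al := fun K : {set 'I_n} => (-1) ^+ #|K| * \sum_(K' in FF | K \subset K') (-1) ^+ #|K'| * W K'.
pose s := [seq fS (Kr Rf K) | K <- enum FF].
pose c := [seq al K | K <- enum FF].
have hs : forall x, x \in s -> SH x.
  move=> x /mapP [K]; rewrite mem_enum => KF ->; apply: SH_fS; apply: Kr_trans => //.
  by move: KF; rewrite inE => /andP[].
have hc : \sum_(i < size s) c`_i = 1.
  rewrite (list_sum1 _ al (fun K => fS (Kr Rf K))) big_enum /=.
  transitivity (\sum_(K in FF | set0 \subset K) al K).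
    by apply: eq_bigl => K; rewrite sub0set andbT.
  rewrite (mobius down W); first by rewrite /W eqxx.
  by rewrite inE eqxx /= -setI_eq0 set0I.
pose v : vec := [ffun j => \sum_(i < size s) c`_i * (s`_i) j].
have hv : forall j, v j = \sum_(i < size s) c`_i * (s`_i) j by move=> j; rewrite ffunE.
have RHSv : RHS37 v := RHS_aff (fun x xs => SH_RHS HV HE (hs x xs)) hc hv.
have -> : w = v.
  apply: (uniq_RHS HV HE HD hR hw RHSv) => J HJ dJ.
  rewrite (coord_in v HJ) hv (list_sum _ al (fun K => fS (Kr Rf K))) big_enum /=.
  under eq_bigr do rewrite ffunE /= (Kr_sub _ dJ).
  rewrite (eq_bigr (fun K : {set 'I_n} => if J \subset K then al K else 0)); last first.
    by move=> K _; case: ifP; rewrite ?mulr1 ?mulr0.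
  rewrite -big_mkcondr /= (mobius down W) /W.
    by rewrite (negbTE (JH_neq0 HE HJ)).
  by rewrite inE HJ orbT dJ.
exists s, c; split => //; first by rewrite !size_map.
move=> x xs; exists [:: x], [:: 1]; split => //.
- by move=> y; rewrite mem_seq1 => /eqP->; exact: hs.
- by move=> a; rewrite mem_seq1 => /eqP->; exact: ler01.
- by rewrite big_ord1.
- by move=> j; rewrite big_ord1 mul1r.
Qed.

End Main.

Theorem corollary3p7 (R : realFieldType) (n : nat)
    (V : {set {set 'I_n}}) (E : {set {set {set 'I_n}}}) :
  vertex_partition V -> hyperedges V E -> downward_closed E ->
  forall w : {ffun JHt V E -> R},
    aff_hull (@MC n R V E) w <-> RHS37 w.
Proof.
move=> HV HE HD w; split; first exact: (aff_RHS HV HE).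
exact: (main_dir HV HE HD).
Qed.
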